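(* Let $\mathcal{X}$ be a finite set and let $e:\mathcal{X}\times\mathcal{X}\to\mathbb{R}$ be a semimetric, i.e. $e(x,y)=e(y,x)$ for all $x,y\in\mathcal{X}$, and $e(x,y)\ge 0$ for all $x,y\in\mathcal{X}$ with equality if and only if $x=y$. Then there is a metric $d$ on $\mathcal{X}$ such that for every $x,y,z\in\mathcal{X}$, $d(x,y)<d(x,z)$ if and only if $e(x,y)<e(x,z)$. *)

(* Defs.v *)
From Stdlib Require Import Reals FinFun.
Open Scope R_scope.

Definition is_semimetric {X : Type} (e : X -> X -> R) : Prop :=
  (forall x y, e x y = e y x) /\
  (forall x y, 0 <= e x y) /\
  (forall x y, e x y = 0 <-> x = y).

Definition is_metric {X : Type} (d : X -> X -> R) : Prop :=
  is_semimetric d /\ (forall x y z, d x z <= d x y + d y z).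

(* Main.v *)
Require Import Defs.
From Stdlib Require Import Reals FinFun List Lra.
Open Scope R_scope.

Lemma sum_ge (l : list R) v : (forall a, In a l -> 0 <= a) -> In v l ->
  v <= fold_right Rplus 0 l.
Proof.
  induction l as [|a l IH]; simpl; intros H Hin; [contradiction|].
  assert (0 <= fold_right Rplus 0 l).
  { clear IH Hin. induction l as [|b l IH2]; simpl; [lra|].
    assert (0 <= b) by (apply H; simpl; auto).
    assert (0 <= fold_right Rplus 0 l) by (apply IH2; intros; apply H; simpl in *; tauto).
    lra. }
  destruct Hin as [<-|Hin].
  - lra.
  - assert (0 <= a) by (apply H; auto).
    assert (v <= fold_right Rplus 0 l) by (apply IH; auto).
    lra.
Qed.

Theorem mainTheorem4 (X : Type) (HX : Finite X) (e : X -> X -> R)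
  (He : is_semimetric e) :
  exists d : X -> X -> R, is_metric d /\
    (forall x y z, d x y < d x z <-> e x y < e x z).
Proof.
  destruct He as [Hs [Hn Hz]].
  destruct HX as [l Hl].
  set (M := fold_right Rplus 0 (map (fun p => e (fst p) (snd p)) (list_prod l l))).
  assert (HM : forall x y, e x y <= M).
  { intros x y. apply sum_ge.
    - intros a Ha. apply in_map_iff in Ha. destruct Ha as [p [<- _]]. apply Hn.
    - apply in_map_iff. exists (x, y). split; [reflexivity|].
      apply in_prod; apply Hl. }
  exists (fun x y => if Req_EM_T (e x y) 0 then 0 else e x y + M).
  assert (Hpos : forall x y, e x y <> 0 -> 0 < e x y).
  { intros x y H. pose proof (Hn x y). lra. }
  split; [split; [split; [|split]|]|].
  - intros x y. rewrite Hs. reflexivity.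
  - intros x y. destruct (Req_EM_T (e x y) 0); [lra|].
    pose proof (Hpos x y n). pose proof (Hn x x). pose proof (HM x x). lra.
  - intros x y. destruct (Req_EM_T (e x y) 0) as [E|E].
    + split; auto. intros _. apply Hz; auto.
    + split; intro H.
      * pose proof (Hpos x y E). pose proof (Hn x x). pose proof (HM x x). lra.
      * exfalso. apply E, Hz, H.
  - intros x y z.
    pose proof (HM x z). pose proof (Hn x y). pose proof (Hn y z). pose proof (Hn x z).
    destruct (Req_EM_T (e x z) 0); destruct (Req_EM_T (e x y) 0) as [Exy|Exy];
      destruct (Req_EM_T (e y z) 0) as [Eyz|Eyz]; try lra.
    all: try (apply Hz in Exy); try (apply Hz in Eyz); subst;
      try (exfalso; apply n; apply Hz; reflexivity); lra.
  - intros x y z. pose proof (Hn x y). pose proof (Hn x z).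
    pose proof (HM x x). pose proof (Hn x x).
    destruct (Req_EM_T (e x y) 0); destruct (Req_EM_T (e x z) 0); split; intro; lra.
Qed.
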